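(* Let $D\ge2$ be an integer, $x\ge0$, and set $\lambda^{(0)}_{kj}=\frac{1}{D^2+x}+\delta_{j0}\delta_{k0}\frac{x}{D^2+x}$ for $k,j\in\{0,\dots,D-1\}$. Define for $n\ge0$ the unnormalized quantities $$\lambda^{(n)}_{kj}=\sum_{k'=0}^{D-1}e^{-2\pi i kk'/D}\Big[\sum_{k''=0}^{D-1}e^{-2\pi i k''k'/D}\lambda^{(0)}_{k''j}\Big]^{2^n},$$ and normalize them to sum to 1 over all $k,j$. Then the normalized value is $$\lambda^{(n)}_{00}=\frac{(x+D)^{2^n}+(D-1)x^{2^n}}{D\big[(x+D)^{2^n}+(D-1)D^{2^n}\big]}.$$ In particular, for $x=D$ one has $\lambda^{(n)}_{00}=1/D$ for all $n$, i.e. it is a fixed point of the iteration.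
   Context: This iteration describes the action of $n$ rounds of a bipartite purification protocol for $D$-dimensional systems on a Bell-diagonal state with diagonal elements $\lambda_{kj}$; it is applied with $D=2^{N/2}$ to a maximally depolarized $N$-qubit linear cluster state split into two halves of $N/2$ qubits. *)

(* Defs.v *)
From mathcomp Require Import all_boot all_order all_algebra.
From mathcomp Require Import complex.
From mathcomp Require Import reals trigo.
Set Implicit Arguments. Unset Strict Implicit. Unset Printing Implicit Defensive.
Import Order.TTheory GRing.Theory Num.Theory.
Local Open Scope ring_scope.
Local Open Scope complex_scope.

Definition expi (R : realType) (t : R) : R[i] := (cos t +i* sin t)%C.

Definition phase (R : realType) (D a b : nat) : R[i] :=
  expi (- (2 * pi * (a * b)%:R / D%:R)).

Definition lam0 (R : realType) (D : nat) (x : R) (k j : nat) : R[i] :=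
  ((1 / ((D ^ 2)%:R + x) + ((k == 0%N) && (j == 0%N))%:R * (x / ((D ^ 2)%:R + x)))%:C)%C.

Definition lamU (R : realType) (D : nat) (x : R) (n k j : nat) : R[i] :=
  \sum_(k' < D) phase R D k k' *
     (\sum_(k'' < D) phase R D k'' k' * lam0 D x k'' j) ^+ (2 ^ n).

Definition lamN (R : realType) (D : nat) (x : R) (n k j : nat) : R[i] :=
  lamU D x n k j / (\sum_(k1 < D) \sum_(j1 < D) lamU D x n k1 j1).

(* Main.v *)
Require Import Defs.
From mathcomp Require Import all_boot all_order all_algebra.
From mathcomp Require Import complex.
From mathcomp Require Import reals trigo.
From mathcomp Require Import ring lra.
Import Order.TTheory GRing.Theory Num.Theory.
Local Open Scope ring_scope.
Set Implicit Arguments. Unset Strict Implicit. Unset Printing Implicit Defensive.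
Section S.
Local Open Scope complex_scope.
Variable R : realType.

Lemma expiD (a b : R) : expi (a + b) = expi a * expi b.
Proof.
rewrite /expi sinD cosD /=; congr Complex; ring.
Qed.

Lemma expi0 : expi (0 : R) = 1.
Proof. by rewrite /expi cos0 sin0. Qed.

Lemma expiMn (t : R) n : expi (n%:R * t) = expi t ^+ n.
Proof.
elim: n => [|n IH]; first by rewrite mul0r expi0 expr0.
by rewrite -addn1 natrD mulrDl mul1r expiD IH exprD expr1.
Qed.

Lemma expiN2pi : expi (- (pi *+ 2)) = 1 :> R[i].
Proof. by rewrite /expi cosN sinN cos2pi sin2pi oppr0. Qed.

Lemma phaseE (D a b : nat) : phase R D a b = expi (- (2 * pi * b%:R / D%:R)) ^+ a.
Proof.
rewrite /phase -expiMn; congr expi; rewrite natrM; ring.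
Qed.

Lemma rootD (D b : nat) : (0 < D)%N -> expi (- (2 * pi * b%:R / D%:R)) ^+ D = 1 :> R[i].
Proof.
move=> D0; rewrite -expiMn.
have -> : D%:R * - (2 * pi * b%:R / D%:R) = b%:R * (- (pi *+ 2)) :> R.
  rewrite mulrC -mulNr -!mulrA mulVf ?pnatr_eq0 -?lt0n // mulr1 mulr2n; ring.
by rewrite expiMn expiN2pi expr1n.
Qed.

Lemma rootne1 (D b : nat) : (0 < b)%N -> (b < D)%N ->
  expi (- (2 * pi * b%:R / D%:R)) != 1 :> R[i].
Proof.
move=> b0 bD; set t := 2 * pi * b%:R / D%:R.
have Dp : (0 : R) < D%:R by rewrite ltr0n (leq_ltn_trans _ bD).
have bp : (0 : R) < b%:R by rewrite ltr0n.
have bltD : (b%:R : R) < D%:R by rewrite ltr_nat.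
have t0 : 0 < t by rewrite /t divr_gt0 // !mulr_gt0 // pi_gt0.
have t2 : t < pi *+ 2.
  rewrite /t ltr_pdivrMr // mulr2n -mulr2n -mulr_natl.
  rewrite mulr1 (_ : pi *+ 2 * D%:R = 2 * pi * D%:R); last by rewrite mulr2n; ring.
  by rewrite ltr_pM2l // mulr_gt0 // pi_gt0.
apply/negP => /eqP E.
have [Hc Hs] : cos t = 1 /\ sin t = 0.
  move: E; rewrite /expi; rewrite cosN sinN => -[-> /eqP]; rewrite oppr_eq0 => /eqP ->; by [].
have pi0 := @pi_gt0 R.
case: (ltgtP t pi) => tpi.
- by have := sin_gt0_pi (x := t) ; rewrite t0 tpi Hs ltxx => /(_ isT).
- have h : 0 < sin (t - pi) by apply: sin_gt0_pi; rewrite subr_gt0 tpi /= ltrBlDr -mulr2n.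
  move: Hs; rewrite -(subrK pi t) sinDpi => /eqP; rewrite oppr_eq0 => /eqP h0.
  by rewrite h0 ltxx in h.
- by move: Hc; rewrite tpi cospi; lra.
Qed.

Lemma Gsum (D b : nat) : (b < D)%N ->
  \sum_(a < D) phase R D a b = if b == 0%N then D%:R else 0.
Proof.
move=> bD; case: eqP => [->|/eqP b0].
  under eq_bigr => a _ do rewrite phaseE mulr0 mul0r oppr0 expi0 expr1n.
  by rewrite sumr_const card_ord.
under eq_bigr => a _ do rewrite phaseE.
have Dp : (0 < D)%N by apply: leq_ltn_trans bD.
have := subrX1 (@expi R (- (2 * pi * b%:R / D%:R))) D.
have b0p : (0 < b)%N by rewrite lt0n.
have ne := @rootne1 D b b0p bD.
rewrite rootD // subrr => /esym /eqP; rewrite mulf_eq0 subr_eq0.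
by rewrite (negbTE ne) /= => /eqP.
Qed.

Lemma phase0l D b : phase R D 0 b = 1.
Proof. by rewrite phaseE expr0. Qed.
Lemma phase0r D b : phase R D b 0 = 1.
Proof. by rewrite phaseE mulr0 mul0r oppr0 expi0 expr1n. Qed.
Lemma phaseC D a b : phase R D a b = phase R D b a.
Proof. by rewrite /phase mulnC. Qed.

Lemma sum_spec (D : nat) (g f : nat -> R[i]) V : (0 < D)%N ->
  (forall i, (0 < i < D)%N -> f i = V) ->
  \sum_(i < D) g i * f i = g 0%N * f 0%N + V * (\sum_(i < D) g i - g 0%N).
Proof.
case: D => // D _ Hf; rewrite !big_ord_recl /= addrAC subrr add0r mulr_sumr.
congr (_ + _); apply: eq_bigr => i _; rewrite mulrC Hf //.
by rewrite /bump /= ltnS ltn_ord.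
Qed.

Definition Gf (D k : nat) : R[i] := if k == 0%N then D%:R else 0.

Lemma inner (D : nat) (x : R) (j k' : nat) : (0 < D)%N -> (k' < D)%N ->
  \sum_(k'' < D) phase R D k'' k' * lam0 D x k'' j =
  ((j == 0%N)%:R * (x / ((D ^ 2)%:R + x)))%:C + (1 / ((D ^ 2)%:R + x))%:C * Gf D k'.
Proof.
move=> D0 kD.
rewrite (@sum_spec D (fun k'' => phase R D k'' k') (fun k'' => lam0 D x k'' j)
   (1 / ((D ^ 2)%:R + x))%:C) //; last first.
  by move=> i /andP [i0 _]; rewrite /lam0 (negbTE (lt0n_neq0 i0)) /= mul0r addr0.
rewrite phase0l Gsum // /Gf /lam0 /= mul1r.
case: eqP => _; rewrite ?rmorphD ?rmorphM ?rmorph_nat ?rmorph0 /=; ring.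
Qed.

Lemma lamUE (D : nat) (x : R) (n k j : nat) : (0 < D)%N -> (k < D)%N ->
  lamU D x n k j =
  (((j == 0%N)%:R * (x / ((D ^ 2)%:R + x)) + 1 / ((D ^ 2)%:R + x) * D%:R) ^+ (2 ^ n))%:C
  + (((j == 0%N)%:R * (x / ((D ^ 2)%:R + x))) ^+ (2 ^ n))%:C * (Gf D k - 1).
Proof.
move=> D0 kD; rewrite /lamU.
under eq_bigr => k' _ do rewrite (inner x j D0 (ltn_ord k')).
rewrite (@sum_spec D (phase R D k)
  (fun k' => (((j == 0%N)%:R * (x / ((D ^ 2)%:R + x)))%:C + (1 / ((D ^ 2)%:R + x))%:C * Gf D k') ^+ (2 ^ n))
  ((((j == 0%N)%:R * (x / ((D ^ 2)%:R + x))) ^+ (2 ^ n))%:C)) //; last first.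
  move=> i /andP [i0 _]; rewrite /Gf (negbTE (lt0n_neq0 i0)) mulr0 addr0.
  by rewrite rmorphXn.
under eq_bigr => k' _ do rewrite phaseC.
rewrite Gsum // phase0r mul1r /Gf eqxx.
congr (_ + _); rewrite rmorphXn; congr (_ ^+ _); by rewrite rmorphD !rmorphM !rmorph_nat.
Qed.

Lemma sum_but0 (D : nat) (f : nat -> R[i]) V : (0 < D)%N ->
  (forall i, (0 < i < D)%N -> f i = V) ->
  \sum_(i < D) f i = f 0%N + V * (D%:R - 1).
Proof.
move=> D0 Hf.
rewrite (eq_bigr (fun i : 'I_D => (fun _ => 1) (nat_of_ord i) * f i)); last by move=> i _; rewrite mul1r.
by rewrite (@sum_spec D (fun _ => 1) f V) // mul1r sumr_const card_ord.
Qed.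

Lemma sumGf (D : nat) : (0 < D)%N -> \sum_(k < D) (Gf D k - 1) = 0.
Proof.
move=> D0; rewrite (@sum_but0 D (fun k => Gf D k - 1) (-1)) //; last first.
  by move=> i /andP [i0 _]; rewrite /Gf (negbTE (lt0n_neq0 i0)) sub0r.
rewrite /Gf eqxx; ring.
Qed.

Lemma packD (p v : R) (m : nat) :
  p%:C *+ m + v%:C *+ m * (m%:R - 1) = (m%:R * (p + v * (m%:R - 1)))%:C.
Proof.
rewrite -[p%:C *+ m]mulr_natl -[v%:C *+ m]mulr_natl.
rewrite rmorphM rmorphD rmorphM rmorphB rmorph1 rmorph_nat; ring.
Qed.

Lemma packC (u v : R) (m : nat) :
  u%:C + v%:C * (m%:R - 1) = (u + v * (m%:R - 1))%:C.
Proof. by rewrite rmorphD rmorphM rmorphB rmorph1 rmorph_nat. Qed.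

Lemma denE (D : nat) (x : R) n : (0 < D)%N ->
  \sum_(k1 < D) \sum_(j1 < D) lamU D x n k1 j1 =
  (D%:R * ((x / ((D ^ 2)%:R + x) + 1 / ((D ^ 2)%:R + x) * D%:R) ^+ (2 ^ n)
     + (1 / ((D ^ 2)%:R + x) * D%:R) ^+ (2 ^ n) * (D%:R - 1)))%:C.
Proof.
move=> D0; rewrite exchange_big /=.
under eq_bigr => j _ do under eq_bigr => k _ do rewrite (lamUE x n j D0 (ltn_ord k)).
under eq_bigr => j _ do rewrite big_split /= -mulr_sumr sumGf // mulr0 addr0 sumr_const card_ord.
rewrite (@sum_but0 D (fun j => (((j == 0%N)%:R * (x / ((D ^ 2)%:R + x)) + 1 / ((D ^ 2)%:R + x) * D%:R) ^+ (2 ^ n))%:C *+ D)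
   (((1 / ((D ^ 2)%:R + x) * D%:R) ^+ (2 ^ n))%:C *+ D)) //; last first.
  by move=> i /andP [i0 _]; rewrite (negbTE (lt0n_neq0 i0)) mul0r add0r.
rewrite eqxx mul1r packD /=; congr (_%:C); by rewrite mul1r.
Qed.

Lemma numE (D : nat) (x : R) n : (0 < D)%N ->
  lamU D x n 0 0 =
  ((x / ((D ^ 2)%:R + x) + 1 / ((D ^ 2)%:R + x) * D%:R) ^+ (2 ^ n)
     + (x / ((D ^ 2)%:R + x)) ^+ (2 ^ n) * (D%:R - 1))%:C.
Proof.
move=> D0; rewrite (@lamUE D x n 0 0 D0 D0) /Gf eqxx packC /=.
by congr (_%:C); rewrite !mul1r.
Qed.
End S.

Theorem mainTheorem10 (R : realType) (D : nat) (x : R) :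
  (2 <= D)%N -> 0 <= x ->
  (forall n : nat,
     lamN D x n 0 0 =
     (((x + D%:R) ^+ (2 ^ n) + (D%:R - 1) * x ^+ (2 ^ n)) /
      (D%:R * ((x + D%:R) ^+ (2 ^ n) + (D%:R - 1) * D%:R ^+ (2 ^ n))))%:C%C)
  /\ (x = D%:R -> forall n : nat, lamN D x n 0 0 = (1 / D%:R)%:C%C).
Proof.
move=> D2 x0; have D0 : (0 < D)%N by apply: leq_trans D2.
have Dr : (1 : R) < D%:R by rewrite ltr1n.
have key : forall n : nat,
     lamN D x n 0 0 =
     (((x + D%:R) ^+ (2 ^ n) + (D%:R - 1) * x ^+ (2 ^ n)) /
      (D%:R * ((x + D%:R) ^+ (2 ^ n) + (D%:R - 1) * D%:R ^+ (2 ^ n))))%:C%C.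
  move=> n; rewrite /lamN (@numE R D x n D0) (@denE R D x n D0) -fmorph_div.
  congr (_%:C)%C.
  have sp : 0 < (D ^ 2)%:R + x by rewrite ltr_wpDr // ltr0n expn_gt0 D0.
  rewrite (_ : x / ((D ^ 2)%:R + x) + 1 / ((D ^ 2)%:R + x) * D%:R = (x + D%:R) / ((D ^ 2)%:R + x)); last first.
    by field; rewrite -natrX gt_eqF.
  rewrite (_ : 1 / ((D ^ 2)%:R + x) * D%:R = D%:R / ((D ^ 2)%:R + x)); last first.
    by field; rewrite -natrX gt_eqF.
  rewrite !expr_div_n.
  have S0 : ((D ^ 2)%:R + x) ^+ (2 ^ n) != 0 by rewrite expf_neq0 // gt_eqF.
  have A0 : 0 < (x + D%:R) ^+ (2 ^ n) by rewrite exprn_gt0 // ltr_wpDl // ltr0n.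
  have C0 : 0 <= (D%:R - 1) * (D%:R : R) ^+ (2 ^ n) by rewrite mulr_ge0 // ?subr_ge0 ?exprn_ge0 // ltW.
  have N0 : (x + D%:R) ^+ (2 ^ n) + (D%:R - 1) * D%:R ^+ (2 ^ n) != 0 by rewrite gt_eqF // ltr_wpDr.
  move: S0 N0.
  set S := ((D ^ 2)%:R + x) ^+ (2 ^ n); set A := (x + D%:R) ^+ (2 ^ n);
  set B := x ^+ (2 ^ n); set C := (D%:R : R) ^+ (2 ^ n) => S0 N0.
  have D0' : (D%:R : R) != 0 by rewrite pnatr_eq0 -lt0n.
  by field; rewrite N0 D0' S0.
split; first exact: key.
move=> xD n; rewrite key; congr (_%:C)%C; rewrite xD.
have A0 : (0 : R) < (D%:R + D%:R) ^+ (2 ^ n) by rewrite exprn_gt0 // ltr_wpDl // ltr0n.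
have C0 : (0 : R) <= (D%:R - 1) * (D%:R : R) ^+ (2 ^ n) by rewrite mulr_ge0 // ?subr_ge0 ?exprn_ge0 // ltW.
have N0 : (D%:R + D%:R) ^+ (2 ^ n) + (D%:R - 1) * D%:R ^+ (2 ^ n) != 0 :> R by rewrite gt_eqF // ltr_wpDr.
have D0' : (D%:R : R) != 0 by rewrite pnatr_eq0 -lt0n.
move: N0; set T := (D%:R + D%:R) ^+ (2 ^ n) + (D%:R - 1) * D%:R ^+ (2 ^ n) => N0.
by field; rewrite N0 D0'.
Qed.
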